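(* Let $G$ be a multiplicative monoid with identity, let $N$ be a $G$-graded near-ring, and let $P$ be a graded weakly prime ideal of $N$. If $I$ and $J$ are graded ideals of $N$ with $IJ=\{0\}$, $I\not\subseteq P$ and $J\not\subseteq P$, then $IP = PJ$.
   Context: A near-ring $(N,+,\cdot)$ is a set with two binary operations such that $(N,+)$ is a group (not necessarily abelian), $(N,\cdot)$ is a semigroup, and $(a+b)y = ay+by$ for all $a,b,y\in N$. For a multiplicative monoid $G$ with identity, $N$ is a $G$-graded near-ring if there is a family $\{N_\sigma\}_{\sigma\in G}$ of additive normal subgroups of $N$ with $N=\bigoplus_{\sigma\in G}N_\sigma$ and $N_\sigma N_\tau\subseteq N_{\sigma\tau}$. An ideal $P$ of $N$ is graded if $P=\bigoplus_{\sigma}(P\cap N_\sigma)$. For ideals $I,J$, $IJ$ denotes their product. A graded ideal $P$ is graded weakly prime if for all graded ideals $I,J$ of $N$ with $\{0\}\neq IJ\subseteq P$, either $I\subseteq P$ or $J\subseteq P$. *)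

(* Defs.v *)
From Stdlib Require Import List.
Import ListNotations.

Record monoid := Monoid {
  mon_car :> Type;
  mon_mul : mon_car -> mon_car -> mon_car;
  mon_one : mon_car;
  mon_mulA : forall a b c, mon_mul a (mon_mul b c) = mon_mul (mon_mul a b) c;
  mon_mul1l : forall a, mon_mul mon_one a = a;
  mon_mul1r : forall a, mon_mul a mon_one = a
}.

(** (Right) near-ring: (N,+) a group (not necessarily abelian),
    (N,.) a semigroup, and (a+b)y = ay+by. *)
Record nearRing := NearRing {
  nr_car :> Type;
  nr_add : nr_car -> nr_car -> nr_car;
  nr_zero : nr_car;
  nr_opp : nr_car -> nr_car;
  nr_mul : nr_car -> nr_car -> nr_car;
  nr_addA : forall a b c, nr_add a (nr_add b c) = nr_add (nr_add a b) c;
  nr_add0l : forall a, nr_add nr_zero a = a;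
  nr_add0r : forall a, nr_add a nr_zero = a;
  nr_addNl : forall a, nr_add (nr_opp a) a = nr_zero;
  nr_addNr : forall a, nr_add a (nr_opp a) = nr_zero;
  nr_mulA : forall a b c, nr_mul a (nr_mul b c) = nr_mul (nr_mul a b) c;
  nr_mulDl : forall a b y, nr_mul (nr_add a b) y = nr_add (nr_mul a y) (nr_mul b y)
}.

Arguments nr_add {_}. Arguments nr_zero {_}. Arguments nr_opp {_}. Arguments nr_mul {_}.
Arguments mon_mul {_}. Arguments mon_one {_}.

Section Defs.
Variable N : nearRing.
Variable G : monoid.

Definition normal_subgroup (A : N -> Prop) : Prop :=
  A nr_zero /\
  (forall x y, A x -> A y -> A (nr_add x y)) /\
  (forall x, A x -> A (nr_opp x)) /\
  (forall n x, A x -> A (nr_add (nr_add n x) (nr_opp n))).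

Definition list_sum (f : G -> N) (s : list G) : N :=
  fold_right (fun g acc => nr_add (f g) acc) nr_zero s.

Definition decomposition (F : G -> N -> Prop) (x : N) (s : list G) (f : G -> N)
  : Prop :=
  NoDup s /\ (forall g, F g (f g)) /\ (forall g, ~ In g s -> f g = nr_zero) /\
  x = list_sum f s.

Definition internal_direct_sum (A : N -> Prop) (F : G -> N -> Prop) : Prop :=
  (forall x, A x <-> exists s f, decomposition F x s f) /\
  (forall x s f t h, decomposition F x s f -> decomposition F x t h ->
     forall g, f g = h g).

Definition graded (Ng : G -> N -> Prop) : Prop :=
  (forall g, normal_subgroup (Ng g)) /\
  internal_direct_sum (fun _ => True) Ng /\
  (forall s t x y, Ng s x -> Ng t y -> Ng (mon_mul s t) (nr_mul x y)).

(** Ideal of a (right) near-ring (Pilz): normal subgroup, IN ⊆ I, and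
    n(n'+i) - nn' ∈ I. *)
Definition ideal (I : N -> Prop) : Prop :=
  normal_subgroup I /\
  (forall i n, I i -> I (nr_mul i n)) /\
  (forall n n' i, I i -> I (nr_add (nr_mul n (nr_add n' i)) (nr_opp (nr_mul n n')))).

Definition graded_ideal (Ng : G -> N -> Prop) (P : N -> Prop) : Prop :=
  ideal P /\ internal_direct_sum P (fun g x => P x /\ Ng g x).

Definition set_mul (I J : N -> Prop) : N -> Prop :=
  fun z => exists i j, I i /\ J j /\ z = nr_mul i j.

Definition set_eq (A B : N -> Prop) : Prop := forall z, A z <-> B z.
Definition subset (A B : N -> Prop) : Prop := forall z, A z -> B z.
Definition zero_set : N -> Prop := fun z => z = nr_zero.

Definition graded_weakly_prime (Ng : G -> N -> Prop) (P : N -> Prop) : Prop :=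
  graded_ideal Ng P /\
  (forall I J, graded_ideal Ng I -> graded_ideal Ng J ->
     ~ set_eq (set_mul I J) zero_set -> subset (set_mul I J) P ->
     subset I P \/ subset J P).

End Defs.

(* Main.v *)
Require Import Defs.
From Stdlib Require Import List Classical ClassicalEpsilon.
Import ListNotations.

Section S.
Variable G : monoid.
Variable N : nearRing.
Variable Ng : G -> N -> Prop.

Local Notation "a ⊕ b" := (@nr_add N a b) (at level 50, left associativity).
Local Notation "⊖ a" := (@nr_opp N a) (at level 35).
Local Notation "a ⊗ b" := (@nr_mul N a b) (at level 40, left associativity).
Local Notation zz := (@nr_zero N).

Lemma addKl (a b : N) : ⊖ a ⊕ (a ⊕ b) = b.
Proof. rewrite nr_addA, nr_addNl, nr_add0l. reflexivity. Qed.
Lemma addKl' (a b : N) : a ⊕ (⊖ a ⊕ b) = b.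
Proof. rewrite nr_addA, nr_addNr, nr_add0l. reflexivity. Qed.
Lemma addKr (a b : N) : a ⊕ b ⊕ ⊖ b = a.
Proof. rewrite <- nr_addA, nr_addNr, nr_add0r. reflexivity. Qed.
Lemma addKr' (a b : N) : a ⊕ ⊖ b ⊕ b = a.
Proof. rewrite <- nr_addA, nr_addNl, nr_add0r. reflexivity. Qed.
Lemma add_cancel_l (a b c : N) : a ⊕ b = a ⊕ c -> b = c.
Proof. intros H. rewrite <- (addKl a b), <- (addKl a c), H. reflexivity. Qed.
Lemma opp_uniq (a b : N) : a ⊕ b = zz -> b = ⊖ a.
Proof. intros H. rewrite <- (addKl a b), H, nr_add0r. reflexivity. Qed.
Lemma opp_opp (a : N) : ⊖ (⊖ a) = a.
Proof. symmetry. apply opp_uniq. apply nr_addNl. Qed.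
Lemma opp_add (a b : N) : ⊖ (a ⊕ b) = ⊖ b ⊕ ⊖ a.
Proof. symmetry. apply opp_uniq. rewrite nr_addA, addKr, nr_addNr. reflexivity. Qed.
Lemma opp0 : ⊖ zz = zz.
Proof. symmetry. apply opp_uniq. apply nr_add0l. Qed.
Lemma mul0l (y : N) : zz ⊗ y = zz.
Proof.
  assert (H : zz ⊗ y ⊕ zz = zz ⊗ y ⊕ zz ⊗ y).
  { rewrite nr_add0r, <- nr_mulDl, nr_add0l. reflexivity. }
  symmetry. exact (add_cancel_l _ _ _ H).
Qed.

Ltac norm := repeat (rewrite <- nr_addA || rewrite addKl || rewrite addKl'
  || rewrite nr_add0l || rewrite nr_add0r || rewrite opp_add || rewrite opp_opp
  || rewrite nr_addNr || rewrite nr_addNl || rewrite opp0).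

Definition eqdec (a b : G) : {a = b} + {a <> b} := excluded_middle_informative (a = b).

Definition sumset (A B : N -> Prop) : N -> Prop :=
  fun x => exists a b, A a /\ B b /\ x = a ⊕ b.

Section Ideals.
Variables A B : N -> Prop.
Hypothesis HA : ideal N A.
Hypothesis HB : ideal N B.

Lemma A0 : A zz. Proof. destruct HA as [[? _] _]; auto. Qed.
Lemma B0 : B zz. Proof. destruct HB as [[? _] _]; auto. Qed.

Lemma sumA a : A a -> sumset A B a.
Proof. intros. exists a, zz. repeat split; auto using B0. rewrite nr_add0r; auto. Qed.
Lemma sumB b : B b -> sumset A B b.
Proof. intros. exists zz, b. repeat split; auto using A0. rewrite nr_add0l; auto. Qed.

Lemma sum0 : sumset A B zz.
Proof. apply sumA, A0. Qed.

Lemma sumD x y : sumset A B x -> sumset A B y -> sumset A B (x ⊕ y).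
Proof.
  destruct HA as [[A0' [AD [AN AC]]] _]. destruct HB as [[B0' [BD [BN BC]]] _].
  intros [a1 [b1 [Ha1 [Hb1 ->]]]] [a2 [b2 [Ha2 [Hb2 ->]]]].
  exists (a1 ⊕ a2), ((⊖ a2 ⊕ b1 ⊕ ⊖ (⊖ a2)) ⊕ b2).
  repeat split; auto. norm. reflexivity.
Qed.

Lemma sum_ideal : ideal N (sumset A B).
Proof.
  pose proof HA as HA'. pose proof HB as HB'.
  destruct HA as [[A0' [AD [AN AC]]] [AR AL]]. destruct HB as [[B0' [BD [BN BC]]] [BR BL]].
  split; [split; [|split; [|split]]|split].
  - apply sum0.
  - apply sumD.
  - intros x [a [b [Ha [Hb ->]]]]. exists (⊖ a), ((a ⊕ ⊖ b) ⊕ ⊖ a).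
    repeat split; auto. norm. reflexivity.
  - intros n x [a [b [Ha [Hb ->]]]]. exists (n ⊕ a ⊕ ⊖ n), (n ⊕ b ⊕ ⊖ n).
    repeat split; auto. norm. reflexivity.
  - intros x m [a [b [Ha [Hb ->]]]]. exists (a ⊗ m), (b ⊗ m).
    repeat split; auto. apply nr_mulDl.
  - intros n n' x [a [b [Ha [Hb ->]]]].
    set (u := n' ⊕ a).
    assert (E : n ⊗ (n' ⊕ (a ⊕ b)) ⊕ ⊖ (n ⊗ n') =
      (n ⊗ (u ⊕ b) ⊕ ⊖ (n ⊗ u)) ⊕ (n ⊗ u ⊕ ⊖ (n ⊗ n'))).
    { unfold u. rewrite (nr_addA _ n' a b). norm. reflexivity. }
    rewrite E. apply sumD. apply sumB. apply BL; auto. apply sumA. apply AL; auto.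
Qed.
End Ideals.

Section Graded.
Hypothesis HN : graded N G Ng.

Lemma Ng0 g : Ng g zz. Proof. destruct HN as [H _]. apply (H g). Qed.
Lemma NgD g x y : Ng g x -> Ng g y -> Ng g (x ⊕ y).
Proof. destruct HN as [H _]. apply (H g). Qed.
Lemma NgN g x : Ng g x -> Ng g (⊖ x).
Proof. destruct HN as [H _]. apply (H g). Qed.
Lemma NgC g n x : Ng g x -> Ng g (n ⊕ x ⊕ ⊖ n).
Proof. destruct HN as [H _]. apply (H g). Qed.

Lemma uniq_N x s f t h : decomposition N G Ng x s f -> decomposition N G Ng x t h ->
  forall g, f g = h g.
Proof. destruct HN as [_ [[_ H] _]]. apply H. Qed.

Definition single (a : G) (c : N) : G -> N := fun g => if eqdec g a then c else zz.

Lemma single_dec a c : Ng a c -> decomposition N G Ng c [a] (single a c).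
Proof.
  intros Hc. unfold single. split; [|split; [|split]].
  - constructor; [simpl; tauto | constructor].
  - intros g. destruct (eqdec g a); [subst; auto | apply Ng0].
  - intros g Hg. destruct (eqdec g a); [subst; simpl in Hg; tauto | auto].
  - simpl. destruct (eqdec a a); [|congruence]. rewrite nr_add0r; auto.
Qed.

Lemma disj a b c : Ng a c -> Ng b c -> a <> b -> c = zz.
Proof.
  intros Ha Hb Hab.
  pose proof (uniq_N _ _ _ _ _ (single_dec a c Ha) (single_dec b c Hb) a) as E.
  unfold single in E. destruct (eqdec a a); [|congruence].
  destruct (eqdec a b); [congruence|]. auto.
Qed.

Lemma comm a b x y : Ng a x -> Ng b y -> a <> b -> x ⊕ y = y ⊕ x.
Proof.
  intros Hx Hy Hab.
  assert (H : x ⊕ y ⊕ ⊖ x ⊕ ⊖ y = zz).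
  { apply (disj a b); auto.
    - replace (x ⊕ y ⊕ ⊖ x ⊕ ⊖ y) with (x ⊕ (y ⊕ ⊖ x ⊕ ⊖ y)) by (norm; reflexivity).
      apply NgD; auto. apply NgC. apply NgN; auto.
    - apply NgD; [|apply NgN; auto]. apply NgC; auto. }
  assert (E : x ⊕ y ⊕ ⊖ x = y).
  { rewrite <- (addKr' (x ⊕ y ⊕ ⊖ x) y), H, nr_add0l. reflexivity. }
  transitivity (x ⊕ y ⊕ ⊖ x ⊕ x). rewrite addKr'. reflexivity. rewrite E. reflexivity.
Qed.

Lemma sum_cons f a s : Defs.list_sum N G f (a :: s) = f a ⊕ Defs.list_sum N G f s.
Proof. reflexivity. Qed.

Lemma comm_sum z g s f : Ng g z -> (forall a, In a s -> a <> g) -> (forall a, Ng a (f a)) ->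
  z ⊕ Defs.list_sum N G f s = Defs.list_sum N G f s ⊕ z.
Proof.
  intros Hz Hs Hf. induction s as [|a s IH].
  - simpl. rewrite nr_add0r, nr_add0l. reflexivity.
  - rewrite sum_cons. rewrite nr_addA, (comm g a z (f a)); auto.
    rewrite <- !nr_addA, IH; auto. intros b Hb; apply Hs; simpl; auto.
    intro E; subst; apply (Hs a); simpl; auto.
Qed.

Lemma sum_ext f f' s : (forall g, In g s -> f g = f' g) -> Defs.list_sum N G f s = Defs.list_sum N G f' s.
Proof.
  induction s as [|a s IH]; intros H; simpl; auto.
  rewrite H, IH; simpl; auto; intros; apply H; simpl; auto.
Qed.

Definition upd (f : G -> N) g z : G -> N := fun a => if eqdec a g then f g ⊕ z else f a.

Lemma sum_upd_in f g z s : NoDup s -> In g s -> (forall a, Ng a (f a)) -> Ng g z ->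
  Defs.list_sum N G f s ⊕ z = Defs.list_sum N G (upd f g z) s.
Proof.
  intros Hnd Hin Hf Hz. induction s as [|a s IH]; [destruct Hin|].
  inversion Hnd; subst. rewrite !sum_cons. unfold upd at 1.
  destruct (eqdec a g) as [->|Hne].
  - rewrite <- nr_addA, <- (comm_sum z g s f); auto.
    rewrite nr_addA. f_equal. apply sum_ext. intros b Hb. unfold upd.
    destruct (eqdec b g); [subst; contradiction | auto].
    intros b Hb E; subst; contradiction.
  - rewrite <- nr_addA, IH; auto. destruct Hin; [congruence|auto].
Qed.

Section Fam.
Variable K : N -> Prop.
Hypothesis K0 : K zz.
Hypothesis KD : forall x y, K x -> K y -> K (x ⊕ y).
Definition Q g x := K x /\ Ng g x.

Lemma dec_add1 x s f g z : decomposition N G Q x s f -> Q g z ->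
  exists s' f', decomposition N G Q (x ⊕ z) s' f'.
Proof.
  intros [Hnd [Hc [Ho Hx]]] [Kz Nz]. subst x.
  assert (Hf : forall a, Ng a (f a)) by (intros a; apply Hc).
  destruct (classic (In g s)) as [Hin|Hnin].
  - exists s, (upd f g z). split; [|split; [|split]]; auto.
    + intros a. unfold upd. destruct (eqdec a g); [subst|apply Hc].
      split; [apply KD; auto; apply Hc | apply NgD; auto].
    + intros a Ha. unfold upd. destruct (eqdec a g); [subst; contradiction | auto].
    + apply sum_upd_in; auto.
  - exists (g :: s), (upd f g z). split; [|split; [|split]]; auto.
    + constructor; auto.
    + intros a. unfold upd. destruct (eqdec a g); [subst|apply Hc].
      split; [apply KD; auto; apply Hc | apply NgD; auto].
    + intros a Ha. unfold upd. destruct (eqdec a g); [subst; simpl in Ha; tauto|].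
      apply Ho. simpl in Ha; tauto.
    + rewrite sum_cons. unfold upd at 1. destruct (eqdec g g); [|congruence].
      rewrite (Ho g Hnin), nr_add0l.
      rewrite (sum_ext (upd f g z) f).
      * symmetry. apply (comm_sum z g); auto. intros a Ha E; subst; contradiction.
      * intros a Ha. unfold upd. destruct (eqdec a g); [subst; contradiction|auto].
Qed.

Lemma dec_sum h t : (forall g, Q g (h g)) -> forall x s f, decomposition N G Q x s f ->
  exists s' f', decomposition N G Q (x ⊕ Defs.list_sum N G h t) s' f'.
Proof.
  intros Hh. induction t as [|b t IH]; intros x s f D.
  - simpl. rewrite nr_add0r. eauto.
  - rewrite sum_cons, nr_addA. destruct (dec_add1 x s f b (h b) D (Hh b)) as [s' [f' D']].
    eapply IH; eauto.
Qed.

Lemma dec_K x s f : decomposition N G Q x s f -> K x.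
Proof.
  intros [_ [Hc [_ ->]]]. induction s as [|a s IH]; simpl; auto.
  apply KD; auto. apply Hc.
Qed.
End Fam.

Lemma dec_mono (F F' : G -> N -> Prop) x s f : (forall g y, F g y -> F' g y) ->
  decomposition N G F x s f -> decomposition N G F' x s f.
Proof. intros H [a [b [c d]]]. split; [|split; [|split]]; auto. Qed.

Lemma sum_graded A B : graded_ideal N G Ng A -> graded_ideal N G Ng B ->
  graded_ideal N G Ng (sumset A B).
Proof.
  intros [IA [DA _]] [IB [DB _]].
  pose proof (sum_ideal A B IA IB) as IK.
  assert (KD : forall x y, sumset A B x -> sumset A B y -> sumset A B (x ⊕ y))
    by (apply sumD; auto).
  split; auto. split.
  - intros x. split.
    + intros [a [b [Ha [Hb ->]]]].
      destruct (proj1 (DA a) Ha) as [s [f Da]].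
      destruct (proj1 (DB b) Hb) as [t [h Db]].
      destruct Db as [Hnd [Hc [Ho ->]]].
      assert (Hc' : forall g, Q (sumset A B) g (h g)).
      { intros g. destruct (Hc g). split; auto. apply sumB; auto. }
      apply (dec_sum (sumset A B) KD h t Hc' a s f).
      eapply dec_mono; [|exact Da]. intros g y [? ?]; split; auto. apply sumA; auto.
    + intros [s [f D]]. eapply dec_K; eauto. apply sum0; auto.
  - intros x s f t h D1 D2. apply (uniq_N x s f t h).
    eapply dec_mono; [|exact D1]; intros g y [? ?]; auto.
    eapply dec_mono; [|exact D2]; intros g y [? ?]; auto.
Qed.
End Graded.
End S.

Theorem theorem2 (G : monoid) (N : nearRing) (Ng : G -> N -> Prop)
  (HN : graded N G Ng) (P : N -> Prop) (HP : graded_weakly_prime N G Ng P)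
  (I J : N -> Prop) (HI : graded_ideal N G Ng I) (HJ : graded_ideal N G Ng J)
  (HIJ : set_eq N (set_mul N I J) (zero_set N))
  (HIP : ~ subset N I P) (HJP : ~ subset N J P) :
  set_eq N (set_mul N I P) (set_mul N P J).
Proof.
  assert (ij0 : forall i j, I i -> J j -> nr_mul i j = nr_zero).
  { intros i j Hi Hj. apply (proj1 (HIJ _)). exists i, j; auto. }
  destruct HP as [GP HPw].
  pose proof GP as [[[P0 [PD [PN PC]]] [PR PL]] _].
  pose proof HI as [[[I0 _] _] _].
  pose proof HJ as [[[J0 _] _] _].
  assert (C1 : forall i p, I i -> P p -> nr_mul i p = nr_zero).
  { intros i p Hi Hp. destruct (classic (nr_mul i p = nr_zero)) as [|Hne]; auto.
    exfalso.
    destruct (HPw I (sumset N J P) HI (sum_graded G N Ng HN J P HJ GP)) as [H|H].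
    - intros E. apply Hne. apply (proj1 (E _)). exists i, p. repeat split; auto.
      exists nr_zero, p. repeat split; auto. rewrite nr_add0l; auto.
    - intros z [i' [k [Hi' [[j [p' [Hj [Hp' ->]]]] ->]]]].
      pose proof (PL i' j p' Hp') as X. rewrite (ij0 i' j), opp0, nr_add0r in X; auto.
    - apply HIP; auto.
    - apply HJP. intros z Hz. apply H. exists z, nr_zero. repeat split; auto.
      rewrite nr_add0r; auto. }
  assert (C2 : forall p j, P p -> J j -> nr_mul p j = nr_zero).
  { intros p j Hp Hj. destruct (classic (nr_mul p j = nr_zero)) as [|Hne]; auto.
    exfalso.
    destruct (HPw (sumset N I P) J (sum_graded G N Ng HN I P HI GP) HJ) as [H|H].
    - intros E. apply Hne. apply (proj1 (E _)). exists p, j. repeat split; auto.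
      exists nr_zero, p. repeat split; auto. rewrite nr_add0l; auto.
    - intros z [k [j' [[i [p' [Hi [Hp' ->]]]] [Hj' ->]]]].
      rewrite nr_mulDl, (ij0 i j'), nr_add0l; auto.
    - apply HIP. intros z Hz. apply H. exists z, nr_zero. repeat split; auto.
      rewrite nr_add0r; auto.
    - apply HJP; auto. }
  intros z. split.
  - intros [a [b [Ha [Hb ->]]]]. rewrite C1; auto.
    exists nr_zero, nr_zero. repeat split; auto. rewrite mul0l; auto.
  - intros [a [b [Ha [Hb ->]]]]. rewrite C2; auto.
    exists nr_zero, nr_zero. repeat split; auto. rewrite mul0l; auto.
Qed.
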